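(* For every sketch $Q$ with $d$ parameter holes, every $v\in\mathbb{R}^d$, every $u\in\mathbb{R}^d_{>0}$, every trajectory $z$ of length $n$, and all indices $0\le i\le j\le n$, the $(i,j)$ entry of $[\![Q]\!]^M_{v,u}(z)$ equals $[\![Q]\!]^q_{v,u}(z_{i:j})$. In particular, $[\![Q]\!]^q_{v,u}(z)$ equals the $(0,n)$ entry of $[\![Q]\!]^M_{v,u}(z)$.
   Context: Fix a set $\mathcal{X}$ of states. A trajectory is a finite sequence $z=(x_0,\dots,x_{n-1})\in\mathcal{X}^*$ of length $n$; for $0\le i\le j\le n$, $z_{i:j}=(x_i,\dots,x_{j-1})$ (empty if $i=j$). Fix predicates of two kinds: a non-parametric predicate $\varphi$ has $\mathsf{sat}_\varphi:\mathcal{X}^*\to\{0,1\}$; a parametric predicate $\varphi$ has a bounded scoring function $\iota_\varphi:\mathcal{X}^*\to\mathbb{R}$. Sketches are generated by $Q::=\varphi_{??i}\mid\varphi\mid Q\,;\,Q\mid Q^k\mid Q\wedge Q$, where $\varphi_{??i}$ is a parametric predicate with a parameter hole labelled $i\in\{1,\dots,d\}$, $\varphi$ in the second case is non-parametric, and $Q^k$ ($k\ge1$) is $k$-fold sequencing $Q\,;\cdots;\,Q$. Quantitative semantics (values in $\mathbb{R}\cup\{\pm\infty\}$), for $v\in\mathbb{R}^d$, $u\in\mathbb{R}^d_{>0}$ and a trajectory $w$ of length $m$: $[\![\varphi_{??i}]\!]^q_{v,u}(w)=(\iota_\varphi(w)-v_i)/u_i$; $[\![\varphi]\!]^q_{v,u}(w)=\infty$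 if $\mathsf{sat}_\varphi(w)=1$ and $-\infty$ otherwise; $[\![Q_1\wedge Q_2]\!]^q_{v,u}(w)=\min\{[\![Q_1]\!]^q_{v,u}(w),[\![Q_2]\!]^q_{v,u}(w)\}$; $[\![Q_1\,;\,Q_2]\!]^q_{v,u}(w)=\max_{0\le k\le m}\min\{[\![Q_1]\!]^q_{v,u}(w_{0:k}),[\![Q_2]\!]^q_{v,u}(w_{k:m})\}$. Matrix semantics: for $z$ of length $n$, $[\![Q]\!]^M_{v,u}(z)$ is an $(n+1)\times(n+1)$ matrix over $\mathbb{R}\cup\{\pm\infty\}$ indexed by $0,\dots,n$: for $Q=\varphi_{??i}$ the $(i',j')$ entry is $(\iota_\varphi(z_{i':j'})-v_i)/u_i$ if $i'\le j'$ and $-\infty$ if $i'>j'$; for non-parametric $Q=\varphi$ the $(i',j')$ entry is $[\![\varphi]\!]^q_{v,u}(z_{i':j'})$ if $i'\le j'$ and $-\infty$ otherwise; $[\![Q_1\wedge Q_2]\!]^M_{v,u}(z)$ is the entrywise minimum of the two matrices; $[\![Q_1\,;\,Q_2]\!]^M_{v,u}(z)=A\cdot B$ with $A=[\![Q_1]\!]^M_{v,u}(z)$, $B=[\![Q_2]\!]^M_{v,u}(z)$ and $(A\cdot B)_{i',j'}=\max_{0\le k\le n}\min\{A_{i',k},B_{k,j'}\}$. *)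

(* Defs.v *)
From mathcomp Require Import all_boot all_order all_algebra.
From mathcomp Require Import reals constructive_ereal.
Set Implicit Arguments. Unset Strict Implicit. Unset Printing Implicit Defensive.
Import Order.TTheory GRing.Theory Num.Theory.
Local Open Scope ring_scope.
Local Open Scope ereal_scope.

Section Sketch.
Variables (R : realType) (X : Type) (d : nat).

(* Sketches with d parameter holes (holes labelled by 'I_d, i.e. 0..d-1,
   instead of 1..d).  Predicates are given by their semantic data:
   a parametric predicate by its scoring function iota, a non-parametric one
   by its satisfaction function sat. *)
Inductive sketch : Type :=
| SParam of (seq X -> R) & 'I_d
| SNonParam of (seq X -> bool)
| SSeq of sketch & sketch
| SPow of nat & sketch
| SAnd of sketch & sketch.

Fixpoint wf_sketch (Q : sketch) : Prop :=
  match Q with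
  | SParam iota _ => exists M : R, forall w, (`|iota w| <= M)%R
  | SNonParam _ => True
  | SSeq Q1 Q2 => wf_sketch Q1 /\ wf_sketch Q2
  | SPow k Q1 => (1 <= k)%N /\ wf_sketch Q1
  | SAnd Q1 Q2 => wf_sketch Q1 /\ wf_sketch Q2
  end.

Definition slice (z : seq X) (i j : nat) : seq X := take (j - i) (drop i z).

Definition qseq (f g : seq X -> \bar R) (w : seq X) : \bar R :=
  \big[maxe/-oo]_(0 <= k < (size w).+1)
     mine (f (slice w 0 k)) (g (slice w k (size w))).

(* k-fold sequencing f ; ... ; f  (only meaningful for k >= 1) *)
Fixpoint qpow (k : nat) (f : seq X -> \bar R) : seq X -> \bar R :=
  match k with
  | 0 | 1 => f
  | k'.+1 => qseq f (qpow k' f)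
  end.

Fixpoint qsem (v u : 'I_d -> R) (Q : sketch) (w : seq X) : \bar R :=
  match Q with
  | SParam iota i => ((iota w - v i) / u i)%R%:E
  | SNonParam sat => if sat w then +oo else -oo
  | SSeq Q1 Q2 => qseq (qsem v u Q1) (qsem v u Q2) w
  | SPow k Q1 => qpow k (qsem v u Q1) w
  | SAnd Q1 Q2 => mine (qsem v u Q1 w) (qsem v u Q2 w)
  end.

Definition mmul (m : nat) (A B : 'M[\bar R]_m) : 'M[\bar R]_m :=
  \matrix_(i < m, j < m) \big[maxe/-oo]_(k < m) mine (A i k) (B k j).

Fixpoint mpow (m : nat) (k : nat) (A : 'M[\bar R]_m) : 'M[\bar R]_m :=
  match k with
  | 0 | 1 => A
  | k'.+1 => mmul A (mpow k' A)
  end.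

Fixpoint msem (v u : 'I_d -> R) (Q : sketch) (z : seq X)
  : 'M[\bar R]_((size z).+1) :=
  match Q with
  | SParam iota i =>
      \matrix_(i' < (size z).+1, j' < (size z).+1)
        if (i' <= j')%N then ((iota (slice z i' j') - v i) / u i)%R%:E
        else -oo
  | SNonParam sat =>
      \matrix_(i' < (size z).+1, j' < (size z).+1)
        if (i' <= j')%N then (if sat (slice z i' j') then +oo else -oo)
        else -oo
  | SSeq Q1 Q2 => mmul (msem v u Q1 z) (msem v u Q2 z)
  | SPow k Q1 => mpow k (msem v u Q1 z)
  | SAnd Q1 Q2 =>
      \matrix_(i' < (size z).+1, j' < (size z).+1)
        mine (msem v u Q1 z i' j') (msem v u Q2 z i' j')
  end.

End Sketch.

(* Main.v *)
Set Warnings "-notation-overridden,-ambiguous-paths".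
Require Import Defs.
From mathcomp Require Import all_boot all_order all_algebra.
From mathcomp Require Import reals constructive_ereal.
Import Order.TTheory GRing.Theory Num.Theory.
Local Open Scope ring_scope.
Local Open Scope ereal_scope.

Lemma slice_slice (X : Type) (z : seq X) i j a b :
  (a <= b)%N -> (b <= j - i)%N -> slice (slice z i j) a b = slice z (i + a) (i + b).
Proof.
move=> hab hb; have ha : (a <= j - i)%N by apply: leq_trans hb.
rewrite /slice -(subnK ha) -take_drop take_takel ?drop_drop ?subnDl ?(addnC a i) //.
by rewrite leq_sub2r.
Qed.
Lemma size_slice (X : Type) (z : seq X) i j :
  (j <= size z)%N -> size (slice z i j) = (j - i)%N.
Proof.
move=> hj; rewrite /slice size_take size_drop.
case: ltnP => // h; apply/eqP; rewrite eqn_leq h leq_sub2r //.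
Qed.

Section M.
Variables (R : realType) (X : Type) (z : seq X).
Let n := size z.

Definition good (A : 'M[\bar R]_n.+1) (f : seq X -> \bar R) :=
  (forall i j : 'I_n.+1, (i <= j)%N -> A i j = f (slice z i j)) /\
  (forall i j : 'I_n.+1, (j < i)%N -> A i j = -oo).

Lemma good_mmul A B f g : good A f -> good B g -> good (mmul A B) (qseq f g).
Proof.
move=> [HA LA] [HB LB]; split; last first.
  move=> i j hji; rewrite mxE big1 // => k _.
  case: (ltnP k i) => hk; first by rewrite LA // minNye.
  by rewrite (LB k j) ?mineNy // (leq_trans hji hk).
move=> i j hij; rewrite mxE /qseq.
have hj : (j <= n)%N by rewrite -ltnS.
rewrite size_slice //.
pose G k := mine (A i (inord k)) (B (inord k) j).
rewrite (eq_bigr (fun k : 'I_n.+1 => G k)); last first.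
  by move=> k _; rewrite /G inord_val.
rewrite -(big_mkord xpredT G).
rewrite (big_cat_nat _ (n:=i)) //=; last exact: ltnW (ltn_ord i).
rewrite big1_seq ?maxNye; last first.
  move=> k /andP[_]; rewrite mem_index_iota => /andP[_ hk].
  rewrite /G LA ?minNye // inordK //; apply: ltn_trans hk (ltn_ord i).
rewrite (big_cat_nat _ (n:=j.+1)) //=; last exact: leq_trans hij (leqnSn _).
rewrite [X in maxe _ X]big1_seq ?maxeNy; last first.
  move=> k /andP[_]; rewrite mem_index_iota => /andP[hk hk2].
  rewrite /G LB ?mineNy // inordK //.
rewrite -{1}(add0n i) big_addn subSn // big_mkord [RHS]big_mkord.
apply: eq_bigr => k _.
have hk : (k + i <= j)%N by rewrite addnC -leq_subRL // -ltnS.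
have hkn : (k + i < n.+1)%N by apply: leq_ltn_trans hk (ltn_ord j).
rewrite /G HA ?inordK //; last by rewrite leq_addl.
rewrite HB ?inordK //.
rewrite !slice_slice ?subnn ?leqnn ?leq_addl // ?leq0n ?addn0.
  by rewrite (addnC i k) subnKC.
all: by rewrite -ltnS.
Qed.

Lemma good_mpow k A f : good A f -> good (mpow k A) (qpow k f).
Proof.
move=> gA; elim: k => [|[|k] IH] //=.
exact: good_mmul.
Qed.
End M.

Lemma good_msem (R : realType) (X : Type) (d : nat) (Q : sketch R X d) v u z :
  @good R X z (msem v u Q z) (qsem v u Q).
Proof.
elim: Q => [iota i|sat|Q1 IH1 Q2 IH2|k Q1 IH|Q1 IH1 Q2 IH2] /=.
- by split=> i' j' h; rewrite mxE ?h // leqNgt h.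
- by split=> i' j' h; rewrite mxE ?h // leqNgt h.
- exact: good_mmul.
- exact: good_mpow.
- case: IH1 => H1 L1; case: IH2 => H2 L2.
  split=> i' j' h; rewrite mxE; first by rewrite H1 // H2.
  by rewrite L1 // minNye.
Qed.

Local Close Scope ereal_scope.
Theorem theorem4 (R : realType) (X : Type) (d : nat) (Q : sketch R X d) :
  wf_sketch Q ->
  forall (v u : 'I_d -> R), (forall i, 0 < u i) ->
  forall (z : seq X),
    (forall i j : 'I_(size z).+1, (i <= j)%N ->
       msem v u Q z i j = qsem v u Q (slice z i j)) /\
    qsem v u Q z = msem v u Q z ord0 ord_max.
Proof.
move=> _ v u _ z; have [H _] := @good_msem _ _ _ Q v u z; split => //.
rewrite H //= /slice drop0 subn0 take_size //.
Qed.
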